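(* Fix an integer $d\ge 2$ and for $k\ge2$ let $G_k=\prod_{i=1}^d P_k$ be the $d$-dimensional grid with all sides of $k$ vertices. There are constants $a_1,a_2,b_1,b_2>0$, depending only on $d$, such that for all $k\ge2$: $$a_1k\le\mathrm{bdim}(G_k)\le a_2k, \qquad b_1k^d\le\mathrm{adim}(G_k)\le b_2k^d.$$ Moreover, the ratios $\mathrm{adim}(G)/\mathrm{bdim}(G)$ and $\mathrm{bdim}(G)/\dim(G)$ are unbounded over connected graphs $G$; in particular, for each fixed $d\ge2$ both tend to infinity along $G_k$ as $k\to\infty$.
   Context: $\prod_{i=1}^d P_k$ is the iterated Cartesian product of $d$ copies of the path $P_k$. $d(x,y)$ denotes graph distance. A set $S\subseteq V(G)$ is a resolving set if for all distinct $x,y$ there is $z\in S$ with $d(x,z)\ne d(y,z)$. $\dim(G)$ is the minimum size of a resolving set. For an integer $k\ge1$ let $d_k(x,y)=\min\{d(x,y),k+1\}$. A set $A\subseteq V(G)$ is an adjacency resolving set if for all distinct $x,y\in V(G)$ there is $z\in A$ with $d_1(x,z)\ne d_1(y,z)$. $\mathrm{adim}(G)$ is the minimum size of an adjacency resolving set. A function $f:V(G)\to\mathbb{Z}_{\ge 0}$ is a resolving broadcast of $G$ if for all distinct $x,y\in V(G)$ there is $z\in V(G)$ with $f(z)=i>0$ and $d_i(x,z)\ne d_i(y,z)$. The broadcast dimension $\mathrm{bdim}(G)$ is the minimum of $\sum_{v\in V(G)}f(v)$ over all resolving broadcasts $f$ of $G$. *)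

(* Defs.v *)
From mathcomp Require Import all_boot all_order.
Set Implicit Arguments. Unset Strict Implicit. Unset Printing Implicit Defensive.

Section Graphs.
Variable T : finType.
Variable e : rel T.

Definition simple_graph : Prop := symmetric e /\ irreflexive e.
Definition connected_graph : Prop := forall x y : T, connect e x y.

Fixpoint reach (n : nat) (x y : T) : bool :=
  match n with
  | 0 => x == y
  | n'.+1 => reach n' x y || [exists z, reach n' x z && e z y]
  end.

(* graph distance: least n with a walk of length n from x to y
   (for disconnected pairs it is #|T|; only connected graphs are used) *)
Definition gdist (x y : T) : nat := find (fun n => reach n x y) (iota 0 #|T|).

Definition tdist (k : nat) (x y : T) : nat := minn (gdist x y) k.+1.

Definition resolving (S : {set T}) : bool :=
  [forall x, forall y, (x != y) ==> [exists z in S, gdist x z != gdist y z]].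

Definition adj_resolving (A : {set T}) : bool :=
  [forall x, forall y, (x != y) ==> [exists z in A, tdist 1 x z != tdist 1 y z]].

(* minimum size; the full vertex set is always (adjacency) resolving,
   so #|T| is a valid default *)
Definition metric_dim : nat :=
  \big[minn/#|T|]_(S : {set T} | resolving S) #|S|.
Definition adim : nat :=
  \big[minn/#|T|]_(S : {set T} | adj_resolving S) #|S|.

Definition resolving_broadcast (f : T -> nat) : bool :=
  [forall x, forall y, (x != y) ==>
     [exists z, (0 < f z) && (tdist (f z) x z != tdist (f z) y z)]].

(* there is a resolving broadcast of total cost n (a function with total
   cost n takes values in [0, n], hence the finite encoding) *)
Definition has_rb_cost (n : nat) : bool :=
  [exists f : {ffun T -> 'I_n.+1},
     (\sum_(v : T) nat_of_ord (f v) == n) &&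
     resolving_broadcast (fun v => nat_of_ord (f v))].

(* minimum cost; the all-ones broadcast resolves and costs #|T| *)
Definition bdim : nat :=
  \big[minn/#|T|]_(n < #|T|.+1 | has_rb_cost n) (n : nat).

End Graphs.

Definition path_adj (k : nat) (a b : 'I_k) : bool :=
  (a.+1 == b :> nat) || (b.+1 == a :> nat).

Definition grid_adj (d k : nat) : rel {ffun 'I_d -> 'I_k} :=
  fun x y => [exists i, path_adj (x i) (y i) &&
                         [forall j, (j != i) ==> (x j == y j)]].
Arguments grid_adj d k : clear implicits.

(* Main.v *)
Require Import Defs.
From mathcomp Require Import all_boot all_order.
From mathcomp Require Import zify.
Set Implicit Arguments. Unset Strict Implicit. Unset Printing Implicit Defensive.

Section Gen.
Variable T : finType.
Variable e : rel T.

Lemma reach_connect n x y : reach e n x y -> connect e x y.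
Proof.
elim: n y => [|n IH] y /=; first by move/eqP->.
case/orP; first exact: IH.
case/existsP=> z /andP[/IH h ezy]; apply: connect_trans h _; exact: connect1.
Qed.

Lemma bigmin_le (I : finType) (P : pred I) (F : I -> nat) m i :
  P i -> \big[minn/m]_(j | P j) F j <= F i.
Proof.
move=> Pi; have : i \in index_enum I by rewrite mem_index_enum.
elim: (index_enum I) => [|x r IH] //; rewrite inE big_cons.
case/orP=> [/eqP <-|/IH h]; first by rewrite Pi geq_minl.
by case: (P x) => //; rewrite geq_min h orbT.
Qed.

Lemma bigmin_ge (I : finType) (P : pred I) (F : I -> nat) m c :
  c <= m -> (forall i, P i -> c <= F i) -> c <= \big[minn/m]_(j | P j) F j.
Proof.
move=> cm H; apply: (big_ind (fun v => c <= v)) => //.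
by move=> a b ha hb; rewrite leq_min ha hb.
Qed.

Lemma cover_card (U : {set T}) :
  (forall x y, x \notin U -> y \notin U -> x = y) -> #|T| <= #|U| + 1.
Proof.
move=> H; rewrite -(cardsC U) leq_add2l.
apply/card_le1_eqP => x y; rewrite !in_setC => hx hy; exact: H.
Qed.

Lemma card_bigcup_le (I : finType) (P : pred I) (B : I -> {set T}) :
  #|\bigcup_(i | P i) B i| <= \sum_(i | P i) #|B i|.
Proof.
apply: (big_ind2 (fun (S : {set T}) n => #|S| <= n)) => //.
  by rewrite cards0.
move=> S1 n1 S2 n2 h1 h2; rewrite cardsU; apply: leq_trans (leq_subr _ _) _.
exact: leq_add.
Qed.

Lemma le_sum_term (I : finType) (F : I -> nat) i : F i <= \sum_j F j.
Proof. by rewrite (bigD1 i) //= leq_addr. Qed.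

Lemma adim_le : adim e <= #|T|.
Proof. apply: (big_ind (fun v => v <= #|T|)) => //; last by move=> *; exact: max_card.
by move=> a b ha hb; rewrite geq_min ha. Qed.

Lemma bdim_leT : bdim e <= #|T|.
Proof. apply: (big_ind (fun v => v <= #|T|)) => //.
  by move=> a b ha hb; rewrite geq_min ha.
by move=> i _; rewrite -ltnS. Qed.

Lemma bdim_le n : has_rb_cost e n -> bdim e <= n.
Proof.
move=> h; case: (ltnP n #|T|.+1) => hn.
  exact: (@bigmin_le 'I_#|T|.+1 (fun i => has_rb_cost e i) (fun i => nat_of_ord i) #|T| (Ordinal hn) h).
exact: leq_trans (bdim_leT) (ltnW hn).
Qed.

End Gen.

Lemma superadd d a b : 0 < d -> a ^ d + b ^ d <= (a + b) ^ d.
Proof.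
case: d => // d _; elim: d => [|d IH]; first by rewrite !expn1.
rewrite !(expnS _ d.+1).
have ha : expn a d.+1 <= expn (a+b) d.+1 by rewrite leq_exp2r // leq_addr.
have hb : expn b d.+1 <= expn (a+b) d.+1 by rewrite leq_exp2r // leq_addl.
rewrite mulnDl; apply: leq_add; exact: leq_mul.
Qed.

Lemma sum_pow_le d (I : finType) (F : I -> nat) : 0 < d ->
  \sum_i F i ^ d <= (\sum_i F i) ^ d.
Proof.
move=> d0; apply: (big_ind2 (fun a b => a <= b ^ d)).
- by rewrite exp0n.
- move=> x1 y1 x2 y2 h1 h2; apply: leq_trans (superadd _ _ d0).
  exact: leq_add.
- by [].
Qed.
Set Implicit Arguments. Unset Strict Implicit. Unset Printing Implicit Defensive.

Definition dn (a b : nat) := (a - b) + (b - a).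

Lemma find_iota_min (P : pred nat) N m :
  m < N -> P m -> (forall j, j < m -> ~~ P j) -> find P (iota 0 N) = m.
Proof.
move=> mN Pm H.
have hs : has P (iota 0 N) by apply/hasP; exists m => //; rewrite mem_iota.
have jN : find P (iota 0 N) < N by rewrite -[N in _ < N](size_iota 0 N) -has_find.
have := nth_find 0 hs; rewrite nth_iota // add0n => Pj.
case: (ltngtP (find P (iota 0 N)) m) => // c.
  by have := H _ c; rewrite Pj.
by have := before_find 0 c; rewrite nth_iota ?add0n ?Pm // (ltn_trans c jN).
Qed.

Section Grid.
Variables d k : nat.
Local Notation V := {ffun 'I_d -> 'I_k}.
Local Notation e := (grid_adj d k).

Definition L1 (x y : V) := \sum_(i < d) dn (x i) (y i).

Lemma L1_sym x y : L1 x y = L1 y x.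
Proof. by apply: eq_bigr => i _; rewrite /dn addnC. Qed.

Lemma L1_tri x y z : L1 x z <= L1 x y + L1 y z.
Proof. rewrite /L1 -big_split /=; apply: leq_sum => i _; rewrite /dn; lia. Qed.

Lemma L1_eq0 x y : (L1 x y == 0) = (x == y).
Proof.
rewrite /L1 sum_nat_eq0; apply/forallP/eqP => [H|->].
  apply/ffunP => i; have := H i; rewrite /dn => /eqP h; apply: val_inj => /=; lia.
by move=> i; rewrite /dn subnn.
Qed.

Lemma coord_le (x y : V) i : dn (x i) (y i) <= L1 x y.
Proof. exact: (le_sum_term (fun j => dn (x j) (y j)) i). Qed.

Lemma L1_adj x y : e x y -> L1 x y = 1.
Proof.
case/existsP=> i /andP[pa /forallP oth].
rewrite /L1 (bigD1 i) //= big1 => [|j ji]; last first.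
  by have := oth j; rewrite ji /= => /eqP ->; rewrite /dn subnn.
move: pa; rewrite /path_adj /dn; case/orP=> /eqP h; lia.
Qed.

Lemma L1_step x y : 0 < L1 x y -> exists z, e z y /\ L1 x z = (L1 x y).-1.
Proof.
move=> pos.
have [i hi] : exists i, x i != y i.
  apply/existsP; move: pos; apply: contraLR => /existsPn H.
  rewrite -leqNgt leqn0 L1_eq0; apply/eqP/ffunP => i; apply/eqP.
  by have := H i; rewrite negbK.
have hi' : (x i : nat) != y i by [].
set v := if (x i : nat) < y i then (y i).-1 else (y i).+1.
have vk : v < k.
  rewrite /v; case: (ltnP (x i) (y i)) => h; first by have := ltn_ord (y i); lia.
  have := ltn_ord (x i). lia.
pose z : V := [ffun j => if j == i then insubd (y i) v else y j].
have zi : (z i : nat) = v by rewrite ffunE eqxx val_insubd vk.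
have zj : forall j, j != i -> z j = y j by move=> j ji; rewrite ffunE (negbTE ji).
exists z; split.
  apply/existsP; exists i; apply/andP; split.
    rewrite /path_adj zi /v; case: (ltnP (x i) (y i)) => h; apply/orP; [left|right]; lia.
  by apply/forallP => j; apply/implyP => ji; rewrite zj.
rewrite /L1 (bigD1 i) //= [in RHS](bigD1 i) //=.
have -> : \sum_(j < d | j != i) dn (x j) (z j) = \sum_(j < d | j != i) dn (x j) (y j).
  by apply: eq_bigr => j ji; rewrite zj.
move: (\sum_(j < d | j != i) dn (x j) (y j)) => S.
rewrite zi /dn /v; case: (ltnP (x i) (y i)) => h; lia.
Qed.

Lemma reach_L1 n x y : reach e n x y = (L1 x y <= n).
Proof.
elim: n x y => [|n IH] x y /=; first by rewrite leqn0 L1_eq0.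
apply/idP/idP.
  case/orP=> [|/existsP[z /andP[]]]; rewrite IH; first by move=> h; exact: leqW.
  move=> h1 /L1_adj h2; apply: leq_trans (L1_tri x z y) _; rewrite h2 addn1; exact: h1.
move=> h; case: (leqP (L1 x y) n) => h2; first by rewrite IH h2.
have [z [ezy hz]] := L1_step (leq_ltn_trans (leq0n n) h2).
apply/orP; right; apply/existsP; exists z; rewrite ezy andbT IH hz; lia.
Qed.

Lemma L1_bound x y : L1 x y <= d * k.-1.
Proof.
apply: leq_trans (_ : \sum_(i < d) k.-1 <= _).
  apply: leq_sum => i _; have := ltn_ord (x i); have := ltn_ord (y i); rewrite /dn; lia.
by rewrite sum_nat_const card_ord.
Qed.

Lemma bern m : 0 < k -> m * k.-1 < k ^ m.
Proof.
move=> k0; elim: m => [|m IH]; first by rewrite expn0.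
have : 0 < k ^ m by rewrite expn_gt0 k0.
rewrite expnS; nia.
Qed.

Lemma card_V : #|V| = k ^ d.
Proof. by rewrite card_ffun !card_ord. Qed.

Lemma gdist_L1 x y : 0 < k -> gdist e x y = L1 x y.
Proof.
move=> k0; rewrite /gdist.
have lt : L1 x y < #|V| by rewrite card_V; exact: leq_ltn_trans (L1_bound x y) (bern d k0).
apply: (find_iota_min lt); first by rewrite reach_L1.
by move=> j; rewrite reach_L1 -ltnNge.
Qed.

End Grid.
Set Implicit Arguments. Unset Strict Implicit. Unset Printing Implicit Defensive.

Section Grid2.
Variables d k : nat.
Local Notation V := {ffun 'I_d -> 'I_k}.
Local Notation e := (grid_adj d k).

Definition ball (z : V) r := [set x : V | L1 x z <= r].

Lemma card_ball z r : #|ball z r| <= (2 * r).+1 ^ d.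
Proof.
pose g (x : V) : {ffun 'I_d -> 'I_(2 * r).+1} := [ffun i => inord (x i + r - z i)].
have bnd : forall x : V, x \in ball z r -> forall i, x i + r - z i <= 2 * r /\ z i <= x i + r.
  move=> x; rewrite inE => h i; have := leq_trans (coord_le x z i) h; rewrite /dn => hh; split; lia.
rewrite -(card_in_imset (f := g)); last first.
  move=> x y hx hy /ffunP H; apply/ffunP => i; apply: val_inj => /=.
  have := H i; rewrite !ffunE => /(congr1 val) /=.
  have [h1 h2] := bnd x hx i; have [h3 h4] := bnd y hy i.
  rewrite !inordK ?ltnS //; lia.
by apply: leq_trans (max_card _) _; rewrite card_ffun !card_ord.
Qed.

Lemma adj_sym (x y : V) : e x y -> e y x.
Proof.
case/existsP => i /andP[pa /forallP H]; apply/existsP; exists i; apply/andP; split.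
  by move: pa; rewrite /path_adj orbC.
by apply/forallP => j; apply/implyP => ji; have := H j; rewrite ji /= eq_sym.
Qed.

Lemma grid_simple : simple_graph e.
Proof.
split.
  by move=> x y; apply/idP/idP; apply: adj_sym.
move=> x; apply/negbTE/existsP => -[i /andP[pa _]]; move: pa; rewrite /path_adj; lia.
Qed.

Lemma grid_connected : connected_graph e.
Proof. move=> x y; apply: (reach_connect (n := L1 x y)); by rewrite reach_L1. Qed.

Lemma notin_cover (I : finType) (P : pred I) (F : I -> {set V}) x j :
  x \notin \bigcup_(i | P i) F i -> P j -> x \notin F j.
Proof.
move=> nx pj; apply: contra nx => h; exact: (subsetP (bigcup_sup j pj)).
Qed.

Lemma rb_lower (f : V -> nat) : 0 < k -> 0 < d -> resolving_broadcast e f ->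
  k ^ d <= (3 * \sum_v f v) ^ d + 1.
Proof.
move=> k0 d0 rb.
pose U := \bigcup_(z | 0 < f z) ball z (f z).
have cov : #|V| <= #|U| + 1.
  apply: cover_card => x y hx hy; apply/eqP; apply: contraT => neq.
  move/forallP: rb => /(_ x) /forallP /(_ y) /implyP /(_ neq) /existsP [z /andP[fz]].
  have := notin_cover hx fz; have := notin_cover hy fz; rewrite !inE /tdist !gdist_L1 //.
  lia.
rewrite -card_V; apply: leq_trans cov _; rewrite leq_add2r.
apply: leq_trans (card_bigcup_le _ _) _.
apply: leq_trans (_ : \sum_v (3 * f v) ^ d <= _); last first.
  by rewrite big_distrr /=; apply: sum_pow_le.
rewrite big_mkcond /=; apply: leq_sum => v _; case: ifP => // fv.
apply: leq_trans (card_ball _ _) _; rewrite leq_exp2r //; lia.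
Qed.

Lemma ar_lower (A : {set V}) : 0 < k -> adj_resolving e A ->
  k ^ d <= 3 ^ d * #|A| + 1.
Proof.
move=> k0 ar.
pose U := \bigcup_(a in A) ball a 1.
have cov : #|V| <= #|U| + 1.
  apply: cover_card => x y hx hy; apply/eqP; apply: contraT => neq.
  move/forallP: ar => /(_ x) /forallP /(_ y) /implyP /(_ neq) /existsP [z /andP[fz]].
  have := notin_cover hx fz; have := notin_cover hy fz; rewrite !inE /tdist !gdist_L1 //.
  lia.
rewrite -card_V; apply: leq_trans cov _; rewrite leq_add2r.
apply: leq_trans (card_bigcup_le _ _) _.
apply: leq_trans (_ : \sum_(a in A) 3 ^ d <= _); last by rewrite sum_nat_const mulnC.
by apply: leq_sum => a _; exact: card_ball.
Qed.

Lemma rb_ext (f1 f2 : V -> nat) : f1 =1 f2 ->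
  resolving_broadcast e f1 = resolving_broadcast e f2.
Proof.
move=> H; rewrite /resolving_broadcast; apply: eq_forallb => x; apply: eq_forallb => y.
by congr (_ ==> _); apply: eq_existsb => z; rewrite H.
Qed.

Lemma rb_cost (g : V -> nat) : resolving_broadcast e g -> has_rb_cost e (\sum_v g v).
Proof.
move=> rb; set n := \sum_v g v.
have gn : forall v, g v < n.+1 by move=> v; rewrite ltnS; exact: (le_sum_term g v).
apply/existsP; exists [ffun v => inord (g v) : 'I_n.+1].
have E : forall v, nat_of_ord ([ffun v => inord (g v) : 'I_n.+1] v) = g v.
  by move=> v; rewrite ffunE inordK.
apply/andP; split; last by rewrite (rb_ext E).
by rewrite (eq_bigr _ (fun v _ => E v)).
Qed.

End Grid2.
Set Implicit Arguments. Unset Strict Implicit. Unset Printing Implicit Defensive.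

Section Corners.
Variables d m : nat.
Local Notation V := {ffun 'I_d -> 'I_m.+1}.
Local Notation e := (grid_adj d m.+1).

Definition c0 : V := [ffun _ => ord0].
Definition cj (j : 'I_d) : V := [ffun i => if i == j then ord_max else ord0].
Definition Sc : {set V} := c0 |: [set cj j | j : 'I_d].

Lemma corner_eq (x : V) j : L1 x (cj j) + 2 * x j = L1 x c0 + m.
Proof.
rewrite /L1 (bigD1 j) //= [in RHS](bigD1 j) //=.
have -> : \sum_(i < d | i != j) dn (x i) (cj j i) = \sum_(i < d | i != j) dn (x i) (c0 i).
  by apply: eq_bigr => i ij; rewrite !ffunE (negbTE ij).
move: (\sum_(i < d | i != j) dn (x i) (c0 i)) => S.
rewrite !ffunE eqxx /dn /=; have := ltn_ord (x j); lia.
Qed.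

Lemma corner_res : resolving e Sc.
Proof.
apply/forallP => x; apply/forallP => y; apply/implyP => neq.
move: neq; apply: contraNT => /existsPn H.
have E : forall z, z \in Sc -> L1 x z = L1 y z.
  by move=> z zS; have := H z; rewrite zS /= negbK !gdist_L1 // => /eqP.
apply/eqP/ffunP => j; apply: val_inj => /=.
have h0 := E c0 (setU11 _ _).
have hj : cj j \in Sc by rewrite /Sc inE; apply/orP; right; apply/imsetP; exists j.
have h1 := E (cj j) hj.
have := corner_eq x j; have := corner_eq y j; lia.
Qed.

Lemma card_Sc : #|Sc| <= d.+1.
Proof.
rewrite cardsU1 -[d.+1]add1n; apply: leq_add; first by case: (_ \notin _).
by apply: leq_trans (leq_imset_card _ _) _; rewrite card_ord.
Qed.

Lemma corner_cost : 0 < d -> 0 < m ->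
  exists n, has_rb_cost e n /\ n <= d.+1 * (d * m).
Proof.
move=> d0 m0; pose g (v : V) := if v \in Sc then d * m else 0.
exists (\sum_v g v); split.
  apply: rb_cost; apply/forallP => x; apply/forallP => y; apply/implyP => neq.
  have := corner_res; move/forallP => /(_ x) /forallP /(_ y) /implyP /(_ neq).
  case/existsP => z /andP[zS hz]; apply/existsP; exists z.
  rewrite /g zS muln_gt0 d0 m0 /= /tdist.
  have bx := L1_bound x z; have bz := L1_bound y z; move: hz.
  rewrite !gdist_L1 //=; lia.
rewrite /g -big_mkcond /= sum_nat_const. apply: leq_mul (card_Sc) (leqnn _).
Qed.

End Corners.
Set Implicit Arguments. Unset Strict Implicit. Unset Printing Implicit Defensive.

Section Facts.
Variables d m : nat.
Hypothesis d2 : 2 <= d.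
Local Notation k := m.+2.
Local Notation e := (grid_adj d k).

Lemma kk_le : k * k <= k ^ d.
Proof. by rewrite -{2}(expn1 k) -expnS (leq_pexp2l (ltn0Sn _) d2). Qed.

Lemma k_le : k <= k ^ d.
Proof. rewrite -{1}(expn1 k) (leq_pexp2l (ltn0Sn _)) //; lia. Qed.

Lemma bdim_lb : k <= 4 * bdim e.
Proof.
apply: (big_ind (fun v => k <= 4 * v)).
- rewrite card_V; have := k_le; lia.
- by move=> a b ha hb; lia.
- move=> n /existsP [F /andP[/eqP sF rb]].
  have := rb_lower (ltn0Sn _) (ltnW d2) rb; rewrite sF => h.
  have h2 : (3 * n) ^ d + 1 <= (3 * n + 1) ^ d.
    by have := superadd (3 * n) 1 (ltnW d2); rewrite exp1n.
  have := leq_trans h h2; rewrite leq_exp2r; last by lia.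
  lia.
Qed.

Lemma bdim_ub : bdim e <= d.+1 * d * k.
Proof.
have [n [hn nb]] := corner_cost (m := m.+1) (ltnW d2) (ltn0Sn _).
apply: leq_trans (bdim_le hn) _; apply: leq_trans nb _; rewrite -mulnA leq_mul2l; nia.
Qed.

Lemma adim_lb : k ^ d <= 2 * 3 ^ d * adim e.
Proof.
have kd := k_le.
apply: (big_ind (fun v => k ^ d <= 2 * 3 ^ d * v)).
- by rewrite card_V mulnC leq_pmulr // muln_gt0 expn_gt0.
- by move=> a b ha hb; lia.
- move=> A ar; have h := ar_lower (ltn0Sn _) ar.
  rewrite -mulnA; set a := 3 ^ d * #|A| in h *; lia.
Qed.

Lemma adim_ub : adim e <= k ^ d.
Proof. by rewrite -card_V; exact: adim_le. Qed.

Lemma md_ub : metric_dim e <= d.+1.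
Proof.
apply: leq_trans (card_Sc d m.+1).
exact: (@bigmin_le _ (fun S => resolving e S) (fun S => #|S|) _ _ (corner_res d m.+1)).
Qed.

Lemma md_lb : 0 < metric_dim e.
Proof.
apply: bigmin_ge; first by rewrite card_V expn_gt0.
move=> S rS.
have j : 'I_d by exists 0; lia.
have neq : c0 d m.+1 != cj m.+1 j.
  apply/negP => /eqP /ffunP /(_ j); rewrite !ffunE eqxx => /(congr1 val) /=; lia.
move/forallP: rS => /(_ (c0 d m.+1)) /forallP /(_ (cj m.+1 j)) /implyP /(_ neq).
case/existsP => z /andP[zS _]; apply/card_gt0P; by exists z.
Qed.

End Facts.
From Stdlib Require Import Reals Lra.
Set Implicit Arguments. Unset Strict Implicit.

Lemma lt_div_helper (M a b : R) : (0 < b)%R -> (M * b < a)%R -> (M < a / b)%R.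
Proof.
move=> hb h; apply: (Rmult_lt_reg_r b) => //.
replace (a / b * b)%R with a by (field; lra). exact h.
Qed.

Lemma INR_le m n : (m <= n)%N -> (INR m <= INR n)%R.
Proof. by move=> h; apply: le_INR; apply/leP. Qed.

Lemma INR_expn a b : INR (expn a b) = (INR a ^ b)%R.
Proof. elim: b => [|b IH]; first by rewrite expn0. by rewrite expnS mult_INR IH. Qed.

Lemma INR_pos n : (0 < n)%N -> (0 < INR n)%R.
Proof. by move=> h; apply: lt_0_INR; apply/ltP. Qed.

Open Scope R_scope.
Lemma real2 (M K B A Md P Q R1 : R): ( 0<P -> 0<Q -> 0<R1 -> 2 <= K -> K <= 4*B -> B <= Q*K ->
  K*K <= P*A -> 0 < Md -> Md <= R1 -> Rabs M*(P*Q + 4*R1) < K -> M*B < A /\ M*Md < B)%R.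
Proof.
intros HP HQ HR HK f1 f2 f3 f6 f5 hN.
assert (HB : 0 < B) by lra.
assert (HKK : 4 <= K*K) by nra.
assert (HA : 0 < A).
{ destruct (Rle_lt_dec A 0) as [h|h]; auto. assert (P*A <= 0) by nra. lra. }
destruct (Rle_lt_dec M 0) as [hM|hM].
- split. nra. nra.
- rewrite Rabs_right in hN; last lra.
  rewrite Rmult_plus_distr_l in hN.
  assert (0 <= M*(P*Q)) by (apply Rmult_le_pos; nra).
  assert (0 <= M*(4*R1)) by (apply Rmult_le_pos; lra).
  assert (h1 : M*(P*Q) < K) by lra.
  split.
  + assert (h2 : P*(M*B) <= M*(P*Q)*K).
    { assert (0 <= M*P) by nra. assert (M*P*B <= M*P*(Q*K)) by (apply Rmult_le_compat_l; lra). nra. }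
    assert (h3 : M*(P*Q)*K < K*K) by (apply Rmult_lt_compat_r; lra).
    assert (P*(M*B) < P*A) by lra.
    apply (Rmult_lt_reg_l P); lra.
  + assert (M*Md <= M*R1) by (apply Rmult_le_compat_l; lra).
    lra.
Qed.

Close Scope R_scope.

Lemma part1 d : (2 <= d)%N ->
     (exists a1 a2 b1 b2 : R,
        (0 < a1)%R /\ (0 < a2)%R /\ (0 < b1)%R /\ (0 < b2)%R /\
        forall k : nat, (2 <= k)%N ->
          (a1 * INR k <= INR (bdim (grid_adj d k)))%R /\
          (INR (bdim (grid_adj d k)) <= a2 * INR k)%R /\
          (b1 * INR k ^ d <= INR (adim (grid_adj d k)))%R /\
          (INR (adim (grid_adj d k)) <= b2 * INR k ^ d)%R)
     /\
     (forall M : R, exists K : nat, forall k : nat, (K <= k)%N ->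
        (M < INR (adim (grid_adj d k)) / INR (bdim (grid_adj d k)))%R /\
        (M < INR (bdim (grid_adj d k)) / INR (metric_dim (grid_adj d k)))%R).
Proof.
move=> d2.
have c3 : (0 < INR (2 * expn 3 d))%R by apply: INR_pos; rewrite muln_gt0 expn_gt0.
have c2 : (0 < INR (d.+1 * d))%R by apply: INR_pos; rewrite muln_gt0 /= (ltnW d2).
split.
  exists (/4)%R, (INR (d.+1 * d)), (/ INR (2 * expn 3 d))%R, 1%R.
  split; first lra. split; first lra. split; first exact: Rinv_0_lt_compat.
  split; first lra.
  case=> [|[|m]] // _.
  have f1 := INR_le (bdim_lb m d2).
  have f2 := INR_le (bdim_ub m d2).
  have f3 := INR_le (adim_lb m d2).
  have f4 := INR_le (adim_ub d m).
  have e4 : INR 4 = 4%R by simpl; ring.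
  rewrite ?mult_INR ?INR_expn in c3 f1 f2 f3 f4 *.
  move: f1 f2 f3 f4; rewrite e4.
  generalize (INR (bdim (grid_adj d m.+2))) (INR (adim (grid_adj d m.+2))) (INR m.+2) => B A K f1 f2 f3 f4.
  split; first lra. split; first lra.
  split; last lra.
  apply: (Rmult_le_reg_l (INR 2 * INR 3 ^ d)) => //.
  rewrite -Rmult_assoc Rinv_r; last lra.
  lra.
move=> M.
have [N hN] := INR_unbounded (Rabs M * ((INR 2 * INR 3 ^ d) * (INR d.+1 * INR d) + 4 * INR d.+1)).
exists (N + 2)%N; case=> [|[|m]] hk; first by rewrite addn2 in hk.
  by rewrite addn2 in hk.
have kN : (INR N <= INR m.+2)%R by apply: INR_le; apply: leq_trans hk; exact: leq_addr.
have f1 := INR_le (bdim_lb m d2).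
have f2 := INR_le (bdim_ub m d2).
have f3 := INR_le (leq_trans (kk_le m d2) (adim_lb m d2)).
have f5 := INR_le (md_ub d m).
have f6 := INR_pos (md_lb m d2).
have e4 : INR 4 = 4%R by simpl; ring.
have K2 : (2 <= INR m.+2)%R by have := pos_INR m; rewrite !S_INR; lra.
rewrite ?mult_INR ?INR_expn in c3 c2 f1 f2 f3 f5 *.
move: f1 f2 f3 f5 f6 kN K2; rewrite e4.
generalize (INR (bdim (grid_adj d m.+2))) (INR (adim (grid_adj d m.+2))) (INR m.+2)
  (INR (metric_dim (grid_adj d m.+2))) => B A K Md f1 f2 f3 f5 f6 kN K2.
have R1 : (0 < INR d.+1)%R by apply: INR_pos.
have [h1 h2] := real2 c3 c2 R1 K2 f1 f2 f3 f6 f5 (Rlt_le_trans _ _ _ hN kN).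
split; apply: lt_div_helper => //; lra.
Qed.

Theorem theorem5p4 :
  (forall d : nat, (2 <= d)%N ->
     (exists a1 a2 b1 b2 : R,
        (0 < a1)%R /\ (0 < a2)%R /\ (0 < b1)%R /\ (0 < b2)%R /\
        forall k : nat, (2 <= k)%N ->
          (a1 * INR k <= INR (bdim (grid_adj d k)))%R /\
          (INR (bdim (grid_adj d k)) <= a2 * INR k)%R /\
          (b1 * INR k ^ d <= INR (adim (grid_adj d k)))%R /\
          (INR (adim (grid_adj d k)) <= b2 * INR k ^ d)%R)
     /\
     (forall M : R, exists K : nat, forall k : nat, (K <= k)%N ->
        (M < INR (adim (grid_adj d k)) / INR (bdim (grid_adj d k)))%R /\
        (M < INR (bdim (grid_adj d k)) / INR (metric_dim (grid_adj d k)))%R))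
  /\
  (forall M : R, exists (T : finType) (e : rel T),
     simple_graph e /\ connected_graph e /\
     (M < INR (adim e) / INR (bdim e))%R)
  /\
  (forall M : R, exists (T : finType) (e : rel T),
     simple_graph e /\ connected_graph e /\
     (M < INR (bdim e) / INR (metric_dim e))%R).
Proof.
split; first exact: part1.
have [_ h] := part1 (leqnn 2).
split=> M; have [K hK] := h M; have [h1 h2] := hK K (leqnn K);
  eexists; exists (grid_adj 2 K); (split; [exact: grid_simple|split; [exact: grid_connected|]]) => //.
Qed.
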